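(* Let $(V,D)$ be a smooth projective toric surface with toric boundary $D$, and let $\iota$ be a nonsymplectic involution of $(V,D)$, i.e. an involution of $V$ normalizing the torus $(\mathbb{C}^* )^2\subset V$ whose induced action on the cocharacter lattice $N\cong\mathbb{Z}^2$ has determinant $-1$. Assume the fixed locus $V^\iota$ contains no torus-fixed point of $V$. Then $V$ admits a toric morphism $\pi\colon V\to\mathbb{P}^1$ with general fiber $\mathbb{P}^1$ and with two torus-invariant sections $s_1,s_2$, which commutes with a nontrivial involution of the base $\mathbb{P}^1$, and exactly one of the following holds: (E0) $V^\iota$ consists of four points, two on each $s_i$; (E1) $V^\iota$ is a fiber of $\pi$ together with two points, one on each $s_i$; (E2) $V^\iota$ is the union of two fibers of $\pi$. Moreover, the fan of $V$ is an $\iota$-invariant subdivision of the fan of a Hirzebruch surface $\mathbb{F}_n$, with $n$ even in cases (E0) and (E2) and $n$ odd in case (E1).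
   Context: Standard toric geometry; $\mathbb{F}_n$ denotes the Hirzebruch surface $\mathbb{P}(\mathcal{O}\oplus\mathcal{O}(n))$ over $\mathbb{P}^1$. *)

(* Defs.v *)
From mathcomp Require Import all_boot all_algebra.
From mathcomp Require Import reals complex.
Set Implicit Arguments.
Unset Strict Implicit.
Unset Printing Implicit Defensive.
Import GRing.Theory Num.Theory.
Local Open Scope ring_scope.

(* lattice N = Z^2 (and its dual M = Z^2) *)
Definition Z2 := (int * int)%type.
Definition det2 (u w : Z2) : int := u.1 * w.2 - u.2 * w.1.
Definition negZ2 (u : Z2) : Z2 := (- u.1, - u.2).
Definition pairZ2 (p u : Z2) : int := p.1 * u.1 + p.2 * u.2.
(* m_u := generator of u^perp in M (for primitive u) *)
Definition mperp (u : Z2) : Z2 := (- u.2, u.1).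

(* two-dimensional smooth cone spanned by consecutive rays u, w of S
   (positively oriented, unimodular, no ray of S in its interior) *)
Definition is_cone (S : seq Z2) (u w : Z2) : bool :=
  [&& u \in S, w \in S, det2 u w == 1 &
      ~~ has (fun v => (0 < det2 u v) && (0 < det2 v w)) S].

(* smooth complete fan in N_R = R^2, given by its set of rays
   (complete = smooth projective in dimension 2) *)
Definition smooth_complete_fan (S : seq Z2) : Prop :=
  [/\ uniq S, S != [::] & forall u, u \in S -> exists w, is_cone S u w].

Definition subdivides (S S' : seq Z2) : Prop :=
  smooth_complete_fan S' /\
  forall u w, is_cone S u w -> exists u' w', [/\ is_cone S' u' w',
     0 <= det2 u' u, 0 <= det2 u w', 0 <= det2 u' w & 0 <= det2 w w'].

(* fan of the Hirzebruch surface F_n: rays e, f, -f, -e + n f,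
   where (e, f) is a lattice basis *)
Definition hirzebruch_fan (e f : Z2) (n : nat) : seq Z2 :=
  [:: e; f; negZ2 f; (n%:Z * f.1 - e.1, n%:Z * f.2 - e.2)].

Record mat2 := Mat2 { a11 : int; a12 : int; a21 : int; a22 : int }.
Definition mapply (A : mat2) (u : Z2) : Z2 :=
  (a11 A * u.1 + a12 A * u.2, a21 A * u.1 + a22 A * u.2).
Definition det_mat2 (A : mat2) : int := a11 A * a22 A - a12 A * a21 A.

Section Points.
Variable R : realType.
Local Notation C := (R[i]).

(* character chi^m evaluated at the torus point (x,y) in Hom(M, C^* ) *)
Definition chr (x y : C) (m : Z2) : C := x ^ m.1 * y ^ m.2.

(* points of the toric surface X_S, via the orbit decomposition:
   VTor x y  : point of the open torus (C^* )^2,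
   VRay u c  : point of the orbit O(u) ~ Hom(u^perp, C^* ), c = value on m_u,
   VFix u w  : the torus fixed point of the cone (u,w). *)
Inductive vpoint :=
| VTor of C & C
| VRay of Z2 & C
| VFix of Z2 & Z2.

Definition vvalid (S : seq Z2) (p : vpoint) : Prop :=
  match p with
  | VTor x y => x != 0 /\ y != 0
  | VRay u c => u \in S /\ c != 0
  | VFix u w => is_cone S u w
  end.

(* the automorphism  p |-> t . A_*(p)  of X_S, where A in GL_2(Z) preserves
   the fan and t = (t1,t2) in the torus: this is the general automorphism of
   X_S normalizing the torus. *)
Definition vact (A : mat2) (t1 t2 : C) (p : vpoint) : vpoint :=
  match p with
  | VTor x y =>
      VTor (t1 * chr x y (a11 A, a12 A)) (t2 * chr x y (a21 A, a22 A))
  | VRay u c =>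
      let u' := mapply A u in
      VRay u' (c ^ det_mat2 A * chr t1 t2 (mperp u'))
  | VFix u w =>
      if det_mat2 A == 1 then VFix (mapply A u) (mapply A w)
      else VFix (mapply A w) (mapply A u)
  end.

(* points of P^1 = X_{ {1,-1} }: torus point, fixed point of ray +1,
   fixed point of ray -1 *)
Inductive p1point :=
| P1Tor of C
| P1Pos
| P1Neg.

Definition p1valid (z : p1point) : Prop :=
  match z with P1Tor c => c != 0 | _ => True end.

(* toric morphism X_S -> P^1 induced by the lattice map  pairZ2 p : N -> Z *)
Definition vproj (p : Z2) (q : vpoint) : p1point :=
  match q with
  | VTor x y => P1Tor (chr x y p)
  | VRay u c =>
      if pairZ2 p u == 0 then P1Tor (c ^ (if p == mperp u then 1 else -1 : int))
      else if 0 < pairZ2 p u then P1Pos else P1Neg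
  | VFix u w => if 0 < pairZ2 p u + pairZ2 p w then P1Pos else P1Neg
  end.

(* torus-normalizing automorphism of P^1: z |-> s z^eps (eps = +-1) *)
Definition p1act (eps : bool) (s : C) (z : p1point) : p1point :=
  match z with
  | P1Tor c => P1Tor (s * (if eps then c else c^-1))
  | P1Pos => if eps then P1Pos else P1Neg
  | P1Neg => if eps then P1Neg else P1Pos
  end.

(* the torus-invariant curve D_u (closure of the orbit O(u)) *)
Definition on_divisor (S : seq Z2) (u : Z2) (q : vpoint) : Prop :=
  vvalid S q /\
  match q with
  | VTor _ _ => False
  | VRay u' _ => u' = u
  | VFix a b => a = u \/ b = u
  end.

Definition in_fiber (S : seq Z2) (p : Z2) (z : p1point) (q : vpoint) : Prop :=
  vvalid S q /\ vproj p q = z.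

(* toric morphism  pi_p : X_S -> P^1 with general fiber P^1: p is a
   primitive linear form mapping every cone of S into a cone of the fan of
   P^1, and the two rays +-v of ker p belong to S. *)
Definition toric_ruling (S : seq Z2) (p v : Z2) : Prop :=
  [/\ gcdz p.1 p.2 = 1,
      forall u w, is_cone S u w -> 0 <= pairZ2 p u * pairZ2 p w,
      v \in S, negZ2 v \in S & pairZ2 p v = 0].

End Points.

(* Main.v *)
Require Import Defs.
From mathcomp Require Import all_boot all_order all_algebra.
From mathcomp Require Import reals complex.
From mathcomp Require Import zify ring lra.
Import Order.TTheory GRing.Theory Num.Theory.
Local Open Scope ring_scope.

Lemma det_mapply A u w : det2 (mapply A u) (mapply A w) = det_mat2 A * det2 u w.
Proof. rewrite /det2 /mapply /det_mat2 /=; ring. Qed.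

Lemma plucker (h y z w : Z2) :
  det2 h y * det2 z w - det2 h z * det2 y w + det2 h w * det2 y z = 0.
Proof. rewrite /det2; ring. Qed.

Lemma det2C u w : det2 u w = - det2 w u.
Proof. rewrite /det2; ring. Qed.

Lemma det2uu u : det2 u u = 0.
Proof. rewrite /det2; ring. Qed.

Lemma cramer (a e u : Z2) : det2 a e = 1 ->
  u = (det2 u e * a.1 + det2 a u * e.1, det2 u e * a.2 + det2 a u * e.2).
Proof.
case: u => u1 u2; rewrite /det2 /= => H.
congr pair.
  transitivity (u1 * (a.1 * e.2 - a.2 * e.1)); first by rewrite H mulr1.
  ring.
transitivity (u2 * (a.1 * e.2 - a.2 * e.1)); first by rewrite H mulr1.
ring.
Qed.

Definition succ (S : seq Z2) (u : Z2) := nth u S (find (is_cone S u) S).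

Lemma succP S u : smooth_complete_fan S -> u \in S -> is_cone S u (succ S u).
Proof.
case=> _ _ H /H [w Hw].
have hw: has (is_cone S u) S by apply/hasP; exists w => //; case/and4P: Hw.
exact: nth_find.
Qed.

Lemma cone_noin S u w v : is_cone S u w -> v \in S -> 0 < det2 u v -> 0 < det2 v w -> False.
Proof.
case/and4P => _ _ _ /hasPn H /H /= /negP H' h1 h2; apply: H'; by rewrite h1 h2.
Qed.

Lemma cone_det S u w : is_cone S u w -> det2 u w = 1.
Proof. by case/and4P => _ _ /eqP. Qed.
Lemma cone_inl S u w : is_cone S u w -> u \in S.
Proof. by case/and4P. Qed.
Lemma cone_inr S u w : is_cone S u w -> w \in S.
Proof. by case/and4P. Qed.

Lemma unit_int (k m : int) : k * m = 1 -> k = 1 \/ k = -1.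
Proof.
rewrite mulrC => /intUnitRing.unitzPl; rewrite qualifE => /orP[/eqP|/eqP]; by [left|right].
Qed.

Arguments unit_int {k m}.

Lemma line_pm a e u w : det2 a e = 1 -> det2 a u = 0 -> det2 u w = 1 ->
  u = a \/ u = negZ2 a.
Proof.
move=> Hae Hau Huw.
have Hu := @cramer a e u Hae; rewrite Hau !mul0r !addr0 in Hu.
move: Hu; set k := det2 u e => Hu.
have Hk : det2 u w = k * det2 a w by rewrite {1}Hu /det2 /=; ring.
rewrite Hk in Huw; case/unit_int: Huw => kE; rewrite kE in Hu; rewrite Hu.
  by left; rewrite !mul1r; case: (a).
by right; rewrite !mulN1r.
Qed.

Arguments cone_noin {S u w v}.
Arguments cone_det {S u w}.
Arguments cone_inl {S u w}.
Arguments cone_inr {S u w}.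
Arguments succP {S u}.
Arguments cramer {a e} u.

Definition addZ2 (u w : Z2) : Z2 := (u.1 + w.1, u.2 + w.2).

Lemma mapply_add A u w : mapply A (addZ2 u w) = addZ2 (mapply A u) (mapply A w).
Proof. rewrite /mapply /addZ2 /=; congr pair; ring. Qed.
Lemma mapply_neg A u : mapply A (negZ2 u) = negZ2 (mapply A u).
Proof. rewrite /mapply /negZ2 /=; congr pair; ring. Qed.

Section IntPart.
Variables (S : seq Z2) (A : mat2).
Hypotheses (HS : smooth_complete_fan S)
  (HA : forall u, u \in S -> mapply A u \in S)
  (HAA : forall u, u \in S -> mapply A (mapply A u) = u)
  (HdetA : det_mat2 A = -1)
  (Hnofix : forall u w, is_cone S u w -> mapply A w = u -> mapply A u = w -> False).

Lemma detA u w : det2 (mapply A u) (mapply A w) = - det2 u w.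
Proof. by rewrite det_mapply HdetA mulN1r. Qed.

Lemma cone_image u w : is_cone S u w -> is_cone S (mapply A w) (mapply A u).
Proof.
move=> C; have /and4P[uS wS _ _] := C.
apply/and4P; split; [exact: HA|exact: HA| |].
  by rewrite detA -det2C (cone_det C).
apply/hasPn => v vS; apply/negP => /andP[h1 h2].
apply: (cone_noin C (HA _ vS)).
  by rewrite -{1}(HAA _ uS) detA -det2C.
by rewrite -{1}(HAA _ wS) detA -det2C.
Qed.

Section Ell.
Variable h : Z2.
Hypothesis Hh : mapply A h = h.

Lemma ellA v : det2 h (mapply A v) = - det2 h v.
Proof. by rewrite -{1}Hh detA. Qed.

Lemma no_cross x y : is_cone S x y -> 0 < det2 h x -> det2 h y < 0 -> False.
Proof.
move=> C hx hy; have xS := cone_inl C; have yS := cone_inr C.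
have dxy := cone_det C.
have C' := cone_image _ _ C; have dC' := cone_det C'.
have lAy := ellA y; have lAx := ellA x.
case: (ltrgtP (det2 x (mapply A y)) 0) => [neg|pos|zero].
- have hle : det2 x (mapply A x) <= 0.
    case: (lerP _ 0) => // hp; exfalso.
    by apply: (cone_noin C' xS _ hp); rewrite det2C oppr_gt0.
  have := plucker h (mapply A y) x (mapply A x).
  rewrite lAy lAx dC' (det2C (mapply A y) x). nia.
- have hle : det2 (mapply A y) y <= 0.
    case: (lerP _ 0) => // hp; exfalso.
    exact: (cone_noin C (HA _ yS) pos hp).
  have := plucker h x (mapply A y) y.
  rewrite lAy dxy. nia.
- have HAy := cramer (mapply A y) dxy.
  rewrite zero !mul0r !addr0 in HAy.
  move: HAy; set k := det2 (mapply A y) y => HAy.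
  have Hk : det2 (mapply A y) (mapply A x) = k * det2 x (mapply A x).
    by rewrite {1}HAy /det2 /=; ring.
  rewrite dC' in Hk.
  have Hl : det2 h (mapply A y) = k * det2 h x by rewrite {1}HAy /det2 /=; ring.
  case: (unit_int (esym Hk)) => kE; rewrite kE in HAy Hl.
    apply: (Hnofix _ _ C); first by rewrite HAy !mul1r; case: (x).
    by rewrite -(HAA _ yS) HAy !mul1r; case: (x).
  rewrite lAy in Hl; nia.
Qed.

Lemma exit_ray u : u \in S -> 0 < det2 h u ->
  exists2 x, x \in S & 0 < det2 h x /\ det2 h (succ S x) = 0.
Proof.
move=> uS hu.
case: (boolP (has (fun x => (0 < det2 h x) && (det2 h (succ S x) == 0)) S)).
  by case/hasP => x xS /andP[h1 /eqP h2]; exists x.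
move/hasPn => H; exfalso.
have step x : x \in S -> 0 < det2 h x -> 0 < det2 h (succ S x).
  move=> xS hx; have := H x xS; rewrite hx /= => hne.
  case: (ltrgtP (det2 h (succ S x)) 0) => // [neg|zero].
    by exfalso; exact: (no_cross _ _ (succP HS xS) hx neg).
  by rewrite zero eqxx in hne.
set f := succ S in step.
have inS k x : x \in S -> iter k f x \in S.
  elim: k => [//|k IH] xS /=; exact: cone_inr (succP HS (IH xS)).
have pos k x : x \in S -> 0 < det2 h x -> 0 < det2 h (iter k f x).
  move=> xS hx; elim: k => [//|k IH] /=; exact: step (inS k x xS) IH.
have mono k x : x \in S -> 0 < det2 h x -> 0 < det2 x (iter k.+1 f x).
  move=> xS hx; elim: k => [|k IH]; first by rewrite /= (cone_det (succP HS xS)).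
  have := plucker h x (iter k.+1 f x) (iter k.+2 f x).
  have d1 : det2 (iter k.+1 f x) (iter k.+2 f x) = 1 by exact: cone_det (succP HS (inS _ _ xS)).
  have p1 := pos k.+1 x xS hx; have p2 := pos k.+2 x xS hx.
  rewrite d1; nia.
set s := mkseq (fun i => iter i f u) (size S).+1.
have : ~~ uniq s.
  apply/negP => us.
  have : (size s <= size S)%N.
    by apply: (uniq_leq_size us) => y /mapP [i _ ->]; exact: inS.
  by rewrite size_mkseq ltnn.
case/(uniqPn u) => i [j [ij js]]; rewrite size_mkseq in js.
rewrite !nth_mkseq //; last exact: ltn_trans ij js.
set x := iter i f u => Hij.
have xS : x \in S := inS i u uS.
have hx : 0 < det2 h x := pos i u uS hu.
have := mono (j - i).-1 x xS hx.
rewrite prednK ?subn_gt0 // /x -iterD subnK ?(ltnW ij) // -Hij det2uu.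
by rewrite ltxx.
Qed.

Lemma pos_of_nz v : v \in S -> det2 h v != 0 -> exists2 u, u \in S & 0 < det2 h u.
Proof.
move=> vS; case: (ltrgtP (det2 h v) 0) => // [neg|pos] _.
  by exists (mapply A v); [exact: HA | rewrite ellA oppr_gt0].
by exists v.
Qed.

Lemma pos_exists : h != (0, 0) -> exists2 u, u \in S & 0 < det2 h u.
Proof.
move=> hnz.
have [_ /eqP Sne _] := HS.
have u0S : head (0, 0) S \in S by case: (S) Sne => // x s _; exact: mem_head.
have C := succP HS u0S.
case: (eqVneq (det2 h (head (0,0) S)) 0) => h0; last exact: pos_of_nz u0S h0.
case: (eqVneq (det2 h (succ S (head (0,0) S))) 0) => h1; last exact: pos_of_nz (cone_inr C) h1.
exfalso; move: hnz; case: h Hh h0 h1 => h1' h2' _ h0 h1 /negP; apply.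
have := plucker (h1', h2') (head (0,0) S) (succ S (head (0,0) S)).
have key w := plucker (h1', h2') (head (0,0) S) (succ S (head (0,0) S)) w.
have k1 := key (1, 0); have k2 := key (0, 1).
rewrite h0 h1 (cone_det C) !mul0r !subr0 add0r mulr1 in k1 k2.
move: k1 k2; rewrite /det2 /= => k1 k2.
move=> _; have -> : h1' = 0 by lia. by have -> : h2' = 0 by lia.
Qed.

Lemma fixvec v : h != (0,0) -> det2 h v = 0 -> mapply A v = v.
Proof.
move: Hh; case: h => h1 h2; case: v => v1 v2; rewrite /mapply /det2 /= => [[E1 E2]] hnz hv.
have X1 : h1 * (a11 A * v1 + a12 A * v2 - v1) = 0.
  transitivity (v1 * (a11 A * h1 + a12 A * h2 - h1) + a12 A * (h1 * v2 - h2 * v1)); first ring.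
  by rewrite E1 hv; ring.
have X2 : h2 * (a11 A * v1 + a12 A * v2 - v1) = 0.
  transitivity (v2 * (a11 A * h1 + a12 A * h2 - h1) - a11 A * (h1 * v2 - h2 * v1) + (h1 * v2 - h2 * v1)); first ring.
  by rewrite E1 hv; ring.
have X3 : h1 * (a21 A * v1 + a22 A * v2 - v2) = 0.
  transitivity (v1 * (a21 A * h1 + a22 A * h2 - h2) + a22 A * (h1 * v2 - h2 * v1) - (h1 * v2 - h2 * v1)); first ring.
  by rewrite E2 hv; ring.
have X4 : h2 * (a21 A * v1 + a22 A * v2 - v2) = 0.
  transitivity (v2 * (a21 A * h1 + a22 A * h2 - h2) - a21 A * (h1 * v2 - h2 * v1)); first ring.
  by rewrite E2 hv; ring.
have [h1z|h1nz] := eqVneq h1 0.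
  have h2nz : h2 != 0 by apply: contraNneq hnz => ->; rewrite h1z.
  move/eqP: X2; move/eqP: X4; rewrite !mulf_eq0 (negPf h2nz) /= !subr_eq0 => /eqP-> /eqP->.
  by [].
move/eqP: X1; move/eqP: X3; rewrite !mulf_eq0 (negPf h1nz) /= !subr_eq0 => /eqP-> /eqP->.
by [].
Qed.

End Ell.

Lemma h_exists : exists2 h, mapply A h = h & h != (0,0).
Proof.
have [_ /eqP Sne _] := HS.
have u0S : head (0, 0) S \in S by case: (S) Sne => // x s _; exact: mem_head.
have C := succP HS u0S.
set x := head (0,0) S in u0S C; set y := succ S x in C.
have xS := cone_inl C; have yS := cone_inr C.
case: (eqVneq (addZ2 x (mapply A x)) (0,0)) => hx.
  case: (eqVneq (addZ2 y (mapply A y)) (0,0)) => hy.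
    exfalso.
    have ex : mapply A x = negZ2 x.
      move: hx; rewrite /addZ2 /negZ2; case: (mapply A x) => p q /= [e1 e2].
      congr pair; lia.
    have ey : mapply A y = negZ2 y.
      move: hy; rewrite /addZ2 /negZ2; case: (mapply A y) => p q /= [e1 e2].
      congr pair; lia.
    have := detA x y; rewrite ex ey (cone_det C).
    have -> : det2 (negZ2 x) (negZ2 y) = det2 x y by rewrite /det2 /negZ2 /=; ring.
    rewrite (cone_det C); lia.
  exists (addZ2 y (mapply A y)) => //.
  by rewrite mapply_add (HAA _ yS) /addZ2 addrC [_ + y.2]addrC.
exists (addZ2 x (mapply A x)) => //.
by rewrite mapply_add (HAA _ xS) /addZ2 addrC [_ + x.2]addrC.
Qed.

Lemma fixed_ray : exists a, [/\ a \in S, negZ2 a \in S & mapply A a = a].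
Proof.
have [h Hh hnz] := h_exists.
have [u uS hu] := pos_exists _ Hh hnz.
have [x xS [hx ha]] := exit_ray _ Hh _ uS hu.
have Hh' : mapply A (negZ2 h) = negZ2 h by rewrite mapply_neg Hh.
have hnz' : negZ2 h != (0,0).
  apply: contraNneq hnz; case: (h) => p q; rewrite /negZ2 /= => [[/eqP + /eqP]].
  by rewrite !oppr_eq0 => /eqP-> /eqP->.
have [u' u'S hu'] := pos_exists _ Hh' hnz'.
have [x' x'S [hx' hb]] := exit_ray _ Hh' _ u'S hu'.
have negl v : det2 (negZ2 h) v = - det2 h v by rewrite /det2 /negZ2 /=; ring.
rewrite !negl oppr_gt0 in hx' hb; move/eqP: hb; rewrite oppr_eq0 => /eqP hb.
set a := succ S x in ha *; set b := succ S x' in hb *.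
have Ca := succP HS xS; have Cb := succP HS x'S.
exists a; split; [exact: cone_inr Ca| |exact: fixvec _ Hh _ hnz ha].
have dab : det2 a b = 0.
  have := plucker h a b x; rewrite ha hb !mul0r subrr add0r => /eqP.
  by rewrite mulf_eq0 (gt_eqF hx) /= => /eqP.
have Hb := cramer b (cone_det Ca).
rewrite (det2C b a) dab oppr0 !mul0r !add0r in Hb.
have Hk : det2 x' b = det2 x b * det2 x' a by rewrite {1}Hb /det2 /=; ring.
rewrite (cone_det Cb) in Hk.
case: (unit_int (esym Hk)) => kE; rewrite kE in Hb.
  exfalso.
  have := plucker h x x' a; rewrite ha (cone_det Ca) mul0r addr0 mulr1.
  have -> : det2 x' a = 1 by move: Hk; rewrite kE mul1r.
  rewrite mulr1; lia.
suff -> : negZ2 a = b by exact: cone_inr Cb.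
by rewrite Hb /negZ2 !mulN1r.
Qed.

End IntPart.

Section Chr.
Variable R : realType.
Local Notation C := (R[i]).

Lemma chrD (x y : C) (m m' : Z2) : x != 0 -> y != 0 ->
  chr x y (m.1 + m'.1, m.2 + m'.2) = chr x y m * chr x y m'.
Proof. by move=> hx hy; rewrite /chr /= !expfzDr // mulrACA. Qed.

Lemma chrZ (x y : C) (m : Z2) (k : int) :
  chr x y (k * m.1, k * m.2) = chr x y m ^ k.
Proof. by rewrite /chr /= expfzMl !exprz_exp ![k * _]mulrC. Qed.

Lemma chrM (x y x' y' : C) (m : Z2) :
  chr (x * x') (y * y') m = chr x y m * chr x' y' m.
Proof. by rewrite /chr !expfzMl mulrACA. Qed.

Lemma chr_neq0 (x y : C) m : x != 0 -> y != 0 -> chr x y m != 0.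
Proof. by move=> hx hy; rewrite /chr mulf_neq0 // expfz_neq0. Qed.

Lemma chr11 m : chr (1 : C) 1 m = 1.
Proof. by rewrite /chr !exp1rz mulr1. Qed.

Lemma chr10 (x y : C) : chr x y (1, 0) = x.
Proof. by rewrite /chr /= expr1z expr0z mulr1. Qed.
Lemma chr01 (x y : C) : chr x y (0, 1) = y.
Proof. by rewrite /chr /= expr1z expr0z mul1r. Qed.

Lemma chrN (x y : C) m : chr x y (negZ2 m) = (chr x y m)^-1.
Proof.
have -> : negZ2 m = (-1 * m.1, -1 * m.2) by rewrite /negZ2 !mulN1r.
by rewrite chrZ exprN1.
Qed.

Lemma chr_comp (x y : C) (u w m : Z2) : x != 0 -> y != 0 ->
  chr (chr x y u) (chr x y w) m =
  chr x y (m.1 * u.1 + m.2 * w.1, m.1 * u.2 + m.2 * w.2).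
Proof.
move=> hx hy.
rewrite (@chrD x y (m.1 * u.1, m.1 * u.2) (m.2 * w.1, m.2 * w.2)) // !chrZ.
by [].
Qed.

End Chr.

Section Alg.
Variable C : numFieldType.
Lemma alg_a (X T Y : C) n : X != 0 -> T * (X * Y ^+ n) = X -> T * Y ^+ n = 1.
Proof.
move=> hX E; apply: (mulfI hX); rewrite mulr1 -{2}E mulrCA //.
Qed.
Lemma alg_b (X T Y : C) n : T * Y ^+ n = 1 -> T * (X * Y ^+ n) = X.
Proof. by move=> E; rewrite mulrCA E mulr1. Qed.
Lemma alg_c (Y s : C) : Y != 0 -> Y = s * Y^-1 -> Y ^+ 2 = s.
Proof. by move=> hY E; rewrite expr2 {1}E -mulrA mulVf // mulr1. Qed.
Lemma alg_d (Y s : C) : Y != 0 -> Y ^+ 2 = s -> s * Y^-1 = Y.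
Proof. by move=> hY <-; rewrite expr2 -mulrA mulfV // mulr1. Qed.
Lemma alg_e (T S0 : C) n : T * ((T * (1 * 1 ^+ n)) * (S0 * 1^-1) ^+ n) = 1 -> T ^+ 2 * S0 ^+ n = 1.
Proof. by rewrite expr1n invr1 !mul1r !mulr1 mulrA -expr2. Qed.
Lemma alg_f (c S0 : C) : c != 0 -> (c^-1 * S0 = c <-> c ^+ 2 = S0).
Proof.
move=> hc; split => [E|<-]; last by rewrite expr2 mulKf.
by rewrite expr2 -{2}E mulVKf.
Qed.
Lemma alg_g (c S0 : C) : c != 0 -> S0 != 0 -> (c^-1 * S0^-1 = c <-> c ^+ 2 * S0 = 1).
Proof.
move=> hc hs; split => [E|E].
  by rewrite expr2 -{1}E; field; rewrite hc hs.
have hS : S0 = (c ^+ 2)^-1.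
  apply: (mulfI (expf_neq0 2 hc)); rewrite E mulfV //; exact: expf_neq0.
by rewrite hS; field.
Qed.
Lemma neg_neq (r : C) : r != 0 -> r != -r.
Proof.
move=> hr; apply/negP => /eqP h.
have : r *+ 2 == 0 by rewrite mulr2n {2}h addrN.
by rewrite mulrn_eq0 /= (negPf hr).
Qed.
Lemma m1_neq1 : (-1 : C) != 1.
Proof. by rewrite eq_sym; apply: neg_neq; exact: oner_neq0. Qed.
Lemma inv_sq (c S0 : C) : c != 0 -> (c ^+ 2 * S0 = 1 <-> (c^-1) ^+ 2 = S0).
Proof.
move=> hc; split => [E|<-]; last by rewrite exprVn mulfV // expf_neq0.
have hS : S0 = (c ^+ 2)^-1.
  apply: (mulfI (expf_neq0 2 hc)); rewrite E mulfV //; exact: expf_neq0.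
by rewrite hS exprVn.
Qed.
Lemma sq_pm (r Y S0 : C) : r ^+ 2 = S0 -> (Y ^+ 2 = S0 <-> Y = r \/ Y = -r).
Proof.
move=> <-; split.
  by move/eqP; rewrite eqf_sqr => /orP[/eqP|/eqP]; [left|right].
by case=> ->; rewrite ?sqrrN.
Qed.
Lemma neg_pow (T r : C) n : T * (-r) ^+ n = (-1) ^+ n * (T * r ^+ n).
Proof. by rewrite [in LHS]exprNn mulrCA. Qed.
Lemma inv_neq0 (c : C) : c != 0 -> c^-1 != 0.
Proof. by rewrite invr_eq0. Qed.
Lemma alg_h (s0 c : C) : s0 != 0 -> s0 * (s0 * c^-1)^-1 = c.
Proof. by move=> hs; rewrite invfM invrK mulVKf. Qed.
End Alg.
Arguments neg_neq {C r}.
Arguments inv_neq0 {C c}.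
Arguments m1_neq1 {C}.


Lemma nostraddle S a u w : a \in S -> negZ2 a \in S -> is_cone S u w ->
  0 <= det2 a u * det2 a w.
Proof.
move=> aS naS C; case: (lerP 0 (det2 a u * det2 a w)) => // neg; exfalso.
case: (ltrgtP (det2 a u) 0) => hu.
- have hw : 0 < det2 a w by nia.
  by apply: (cone_noin C aS _ hw); rewrite det2C oppr_gt0.
- have hw : det2 a w < 0 by nia.
  apply: (cone_noin C naS).
    by rewrite /det2 /negZ2 /=; move: hu; rewrite /det2; lia.
  by rewrite /det2 /negZ2 /=; move: hw; rewrite /det2; lia.
- by move: neg; rewrite hu mul0r ltxx.
Qed.

Lemma plk2 (a e u w : Z2) :
  det2 u w * det2 a e = det2 u e * det2 a w - det2 a u * det2 w e.
Proof. rewrite /det2; ring. Qed.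

Lemma UH S a e u w : e \in S -> det2 a e = 1 -> is_cone S u w ->
  0 <= det2 a u -> 0 <= det2 a w ->
  [/\ 0 <= det2 a u, 0 <= det2 u e, 0 <= det2 a w & 0 <= det2 w e] \/
  [/\ 0 <= det2 e u, 0 <= det2 u (negZ2 a), 0 <= det2 e w & 0 <= det2 w (negZ2 a)].
Proof.
move=> eS dae C hu hw.
have I := plk2 a e u w; rewrite dae (cone_det C) mulr1 in I.
have nu : det2 u (negZ2 a) = det2 a u by rewrite /det2 /negZ2 /=; ring.
have nw : det2 w (negZ2 a) = det2 a w by rewrite /det2 /negZ2 /=; ring.
rewrite nu nw (det2C u e) (det2C w e) !oppr_ge0 in I *.
case: (lerP 0 (det2 e u)) => hu'; case: (lerP 0 (det2 e w)) => hw'.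
- by right; split.
- have z : det2 e u = 0 by nia.
  by left; split; lia.
- case: (ltrgtP (det2 e w) 0) => hw''.
  + lia.
  + exfalso; apply: (cone_noin C eS _ hw''); rewrite det2C; lia.
  + by left; split; lia.
- by left; split; lia.
Qed.

Arguments nostraddle {S a u w}.
Arguments UH {S a e u w}.

Lemma negZ2K u : negZ2 (negZ2 u) = u.
Proof. by case: u => x y; rewrite /negZ2 /= !opprK. Qed.

Lemma mperp_neg u : mperp (negZ2 u) = negZ2 (mperp u).
Proof. by case: u. Qed.

Lemma pairZ2_mperp a u : pairZ2 (mperp a) u = det2 a u.
Proof. rewrite /pairZ2 /mperp /det2 /=; ring. Qed.

Definition AT (A : mat2) (m : Z2) : Z2 :=
  (m.1 * a11 A + m.2 * a21 A, m.1 * a12 A + m.2 * a22 A).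

Lemma pairAT A m u : pairZ2 (AT A m) u = pairZ2 m (mapply A u).
Proof. rewrite /pairZ2 /AT /mapply /=; ring. Qed.

Lemma formeq (a e m m' : Z2) : det2 a e = 1 ->
  pairZ2 m a = pairZ2 m' a -> pairZ2 m e = pairZ2 m' e -> m = m'.
Proof.
move=> dae h1 h2.
have key (n : Z2) : n = (pairZ2 n a * e.2 - pairZ2 n e * a.2, pairZ2 n e * a.1 - pairZ2 n a * e.1).
  case: n => n1 n2; move: dae; rewrite /pairZ2 /det2 /= => dae.
  congr pair.
    transitivity (n1 * (a.1 * e.2 - a.2 * e.1)); first by rewrite dae mulr1.
    ring.
  transitivity (n2 * (a.1 * e.2 - a.2 * e.1)); first by rewrite dae mulr1.
  ring.
by rewrite (key m) (key m') h1 h2.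
Qed.

Section CoreInt.
Variables (S : seq Z2) (A : mat2) (a e : Z2) (k : nat).
Hypotheses (HS : smooth_complete_fan S)
  (HA : forall u, u \in S -> mapply A u \in S)
  (HAA : forall u, u \in S -> mapply A (mapply A u) = u)
  (HdetA : det_mat2 A = -1)
  (aS : a \in S) (naS : negZ2 a \in S) (eS : e \in S) (dae : det2 a e = 1)
  (Aa : mapply A a = a)
  (Ae : mapply A e = (k%:Z * a.1 - e.1, k%:Z * a.2 - e.2)).

Local Notation f := (k%:Z * a.1 - e.1, k%:Z * a.2 - e.2).

Lemma detA' u w : det2 (mapply A u) (mapply A w) = - det2 u w.
Proof. by rewrite det_mapply HdetA mulN1r. Qed.

Lemma pA u : det2 a (mapply A u) = - det2 a u.
Proof. by rewrite -{1}Aa detA'. Qed.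

Lemma dxf x : det2 x f = k%:Z * det2 x a - det2 x e.
Proof. rewrite /det2 /=; ring. Qed.
Lemma dfx x : det2 f x = k%:Z * det2 a x - det2 e x.
Proof. rewrite /det2 /=; ring. Qed.
Lemma dnx x : det2 (negZ2 a) x = - det2 a x.
Proof. rewrite /det2 /=; ring. Qed.
Lemma dxn x : det2 x (negZ2 a) = - det2 x a.
Proof. rewrite /det2 /=; ring. Qed.

Lemma dea : det2 e a = -1.
Proof. by rewrite det2C dae. Qed.

Lemma fS : f \in S.
Proof. by rewrite -Ae; exact: HA. Qed.

Lemma ruling : toric_ruling S (mperp a) a.
Proof.
split => //.
- apply/eqP; apply/coprimezP; exists (e.1, e.2).
  by move: dae; rewrite /det2 /mperp /= => <-; ring.
- by move=> u w C; rewrite !pairZ2_mperp; exact: nostraddle aS naS C.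
- by rewrite pairZ2_mperp det2uu.
Qed.

Lemma neq_det x y : det2 a x != det2 a y -> x != y.
Proof. by apply: contraNneq => ->. Qed.

Lemma a_nz : a != negZ2 a.
Proof.
apply/negP => /eqP h; move: dae; rewrite /det2.
have [h1 h2] : a.1 = 0 /\ a.2 = 0.
  by move: h; case: (a) => x y /= [e1 e2]; split; lia.
by rewrite h1 h2 !mul0r subrr.
Qed.

Lemma hirz_cone_ae : is_cone (hirzebruch_fan e a k) a e.
Proof.
apply/and4P; split; rewrite ?inE ?eqxx ?orbT ?dae //.
apply/hasPn => v; rewrite !inE => /or4P[]/eqP->;
  rewrite ?det2uu ?dxf ?dfx ?dnx ?dxn ?dae ?dea ?det2uu ?ltxx ?andbF //=;
  apply/negP => /andP[]; lia.
Qed.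

Lemma hirz_cone_ena : is_cone (hirzebruch_fan e a k) e (negZ2 a).
Proof.
apply/and4P; split; rewrite ?inE ?eqxx ?orbT //; first by rewrite dxn dea opprK.
apply/hasPn => v; rewrite !inE => /or4P[]/eqP->;
  rewrite ?det2uu ?dxf ?dfx ?dnx ?dxn ?dae ?dea ?det2uu; apply/negP => /andP[]; lia.
Qed.

Lemma hirz_cone_nf : is_cone (hirzebruch_fan e a k) (negZ2 a) f.
Proof.
apply/and4P; split; rewrite ?inE ?eqxx ?orbT //; first by rewrite dnx dxf det2uu dae; apply/eqP; lia.
apply/hasPn => v; rewrite !inE => /or4P[]/eqP->;
  rewrite ?det2uu ?dxf ?dfx ?dnx ?dxn ?dae ?dea ?det2uu; apply/negP => /andP[]; lia.
Qed.

Lemma hirz_cone_fa : is_cone (hirzebruch_fan e a k) f a.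
Proof.
apply/and4P; split; rewrite ?inE ?eqxx ?orbT //; first by rewrite dfx det2uu dea; apply/eqP; lia.
apply/hasPn => v; rewrite !inE => /or4P[]/eqP->;
  rewrite ?det2uu ?dxf ?dfx ?dnx ?dxn ?dae ?dea ?det2uu; apply/negP => /andP[]; lia.
Qed.

Lemma hirz_fan : smooth_complete_fan (hirzebruch_fan e a k).
Proof.
split => //.
- rewrite /hirzebruch_fan /= !inE !negb_or !andbT.
  repeat (apply/andP; split); try exact: a_nz;
  apply: neq_det; rewrite ?det2uu ?dxf ?dfx ?dnx ?dxn ?dae ?dea ?det2uu; apply/eqP; lia.
- move=> u; rewrite !inE => /or4P[]/eqP->.
  + by exists (negZ2 a); exact: hirz_cone_ena.
  + by exists e; exact: hirz_cone_ae.
  + by exists f; exact: hirz_cone_nf.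
  + by exists a; exact: hirz_cone_fa.
Qed.

Lemma hirz_sub : subdivides S (hirzebruch_fan e a k).
Proof.
split; first exact: hirz_fan.
move=> u w C.
have hp := nostraddle aS naS C.
have [[hu hw]|[hu hw]] : (0 <= det2 a u /\ 0 <= det2 a w) \/ (det2 a u <= 0 /\ det2 a w <= 0).
  case: (ltrgtP (det2 a u) 0) => hu.
  - by right; split; nia.
  - by left; split; nia.
  - by case: (lerP 0 (det2 a w)) => hw; [left|right]; split; lia.
- case: (UH eS dae C hu hw) => [[h1 h2 h3 h4]|[h1 h2 h3 h4]].
    by exists a, e; split => //; exact: hirz_cone_ae.
  by exists e, (negZ2 a); split => //; exact: hirz_cone_ena.
- have dnf : det2 (negZ2 a) f = 1 by rewrite dnx dxf det2uu dae; lia.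
  have hu' : 0 <= det2 (negZ2 a) u by rewrite dnx; lia.
  have hw' : 0 <= det2 (negZ2 a) w by rewrite dnx; lia.
  case: (UH fS dnf C hu' hw') => [[h1 h2 h3 h4]|[h1 h2 h3 h4]].
    by exists (negZ2 a), f; split => //; exact: hirz_cone_nf.
  rewrite negZ2K in h2 h4.
  by exists f, a; split => //; exact: hirz_cone_fa.
Qed.

Lemma hirz_inv u : u \in hirzebruch_fan e a k -> mapply A u \in hirzebruch_fan e a k.
Proof.
rewrite !inE => /or4P[]/eqP->.
- by rewrite Ae eqxx !orbT.
- by rewrite Aa eqxx !orbT.
- by rewrite mapply_neg Aa eqxx !orbT.
- by rewrite -Ae HAA // eqxx.
Qed.

End CoreInt.

Arguments formeq {a e m m'}.

Section CoreCx.
Variables (R : realType) (S : seq Z2) (A : mat2) (t1 t2 : R[i]) (a e : Z2) (k : nat).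
Hypotheses (HS : smooth_complete_fan S)
  (HA : forall u, u \in S -> mapply A u \in S)
  (HAA : forall u, u \in S -> mapply A (mapply A u) = u)
  (HdetA : det_mat2 A = -1)
  (ht1 : t1 != 0) (ht2 : t2 != 0)
  (Hinv : forall q, vvalid S q -> vact A t1 t2 (vact A t1 t2 q) = q)
  (Hnofix : forall u w, is_cone S u w -> vact A t1 t2 (VFix R u w) <> VFix R u w)
  (aS : a \in S) (naS : negZ2 a \in S) (eS : e \in S) (dae : det2 a e = 1)
  (Aa : mapply A a = a)
  (Ae : mapply A e = (k%:Z * a.1 - e.1, k%:Z * a.2 - e.2)).

Local Notation C := (R[i]).
Let dxf' := dxf a e k.
Let dfx' := dfx a e k.
Let dea' := dea a e dae.
Local Notation p := (mperp a).
Local Notation astar := ((e.2, - e.1) : Z2).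
Local Notation s := (chr t1 t2 (mperp a)).
Local Notation tau := (chr t1 t2 ((e.2, - e.1) : Z2)).

Lemma pair_neg m u : pairZ2 (negZ2 m) u = - pairZ2 m u.
Proof. rewrite /pairZ2 /negZ2 /=; ring. Qed.
Lemma pair_astar u : pairZ2 astar u = det2 u e.
Proof. rewrite /pairZ2 /det2 /=; ring. Qed.

Lemma AT_p : AT A p = negZ2 p.
Proof.
apply: (formeq dae).
  by rewrite pairAT Aa pair_neg !pairZ2_mperp det2uu oppr0.
rewrite pairAT Ae pair_neg !pairZ2_mperp dae dxf' det2uu dae; lia.
Qed.

Lemma AT_astar : AT A astar = (astar.1 + k%:Z * p.1, astar.2 + k%:Z * p.2).
Proof.
have E u : pairZ2 (astar.1 + k%:Z * p.1, astar.2 + k%:Z * p.2) u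
    = det2 u e + k%:Z * det2 a u.
  by rewrite -pair_astar -pairZ2_mperp /pairZ2 /=; ring.
apply: (formeq dae).
  by rewrite pairAT Aa E pair_astar det2uu mulr0 addr0.
rewrite pairAT Ae E pair_astar dfx' det2uu dae; lia.
Qed.

Definition itx (x y : C) := t1 * chr x y (a11 A, a12 A).
Definition ity (x y : C) := t2 * chr x y (a21 A, a22 A).

Lemma vactT x y : vact A t1 t2 (VTor x y) = VTor (itx x y) (ity x y).
Proof. by []. Qed.

Lemma it_neq0 x y : x != 0 -> y != 0 -> itx x y != 0 /\ ity x y != 0.
Proof. by move=> hx hy; split; apply: mulf_neq0 => //; apply: chr_neq0. Qed.

Lemma chr_act x y m : x != 0 -> y != 0 ->
  chr (itx x y) (ity x y) m = chr t1 t2 m * chr x y (AT A m).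
Proof. by move=> hx hy; rewrite /itx /ity chrM chr_comp. Qed.

Opaque itx ity.

Lemma Yc_act x y : x != 0 -> y != 0 ->
  chr (itx x y) (ity x y) p = s * (chr x y p)^-1.
Proof. by move=> hx hy; rewrite chr_act // AT_p chrN. Qed.

Lemma Xc_act x y : x != 0 -> y != 0 ->
  chr (itx x y) (ity x y) astar = tau * (chr x y astar * (chr x y p) ^+ k).
Proof.
move=> hx hy; rewrite chr_act // AT_astar.
by rewrite (@chrD R x y astar (k%:Z * p.1, k%:Z * p.2)) // chrZ.
Qed.

Lemma recon (x y : C) m : x != 0 -> y != 0 ->
  chr x y m = chr x y astar ^ (pairZ2 m a) * chr x y p ^ (pairZ2 m e).
Proof.
move=> hx hy.
have Hm : m = (pairZ2 m a * astar.1 + pairZ2 m e * p.1, pairZ2 m a * astar.2 + pairZ2 m e * p.2).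
  apply: (formeq dae); rewrite /pairZ2 /=; move: dae; rewrite /det2 => d.
    transitivity ((m.1 * a.1 + m.2 * a.2) * (a.1 * e.2 - a.2 * e.1)); first by rewrite d mulr1.
    ring.
  transitivity ((m.1 * e.1 + m.2 * e.2) * (a.1 * e.2 - a.2 * e.1)); first by rewrite d mulr1.
  ring.
rewrite {1}Hm (@chrD R x y (pairZ2 m a * astar.1, pairZ2 m a * astar.2) (pairZ2 m e * p.1, pairZ2 m e * p.2)) //.
by rewrite !chrZ.
Qed.


Lemma torus_eq (x y x' y' : C) : x != 0 -> y != 0 -> x' != 0 -> y' != 0 ->
  chr x y astar = chr x' y' astar -> chr x y p = chr x' y' p -> VTor x y = VTor x' y'.
Proof.
move=> hx hy hx' hy' hX hY.
have e1 : x = x'.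
  transitivity (chr x y (1,0)); first by rewrite chr10.
  transitivity (chr x' y' (1,0)); last by rewrite chr10.
  by rewrite (recon x y (1,0) hx hy) (recon x' y' (1,0) hx' hy') hX hY.
have e2 : y = y'.
  transitivity (chr x y (0,1)); first by rewrite chr01.
  transitivity (chr x' y' (0,1)); last by rewrite chr01.
  by rewrite (recon x y (0,1) hx hy) (recon x' y' (0,1) hx' hy') hX hY.
by rewrite e1 e2.
Qed.
Lemma fixT (x y : C) : x != 0 -> y != 0 ->
  (vact A t1 t2 (VTor x y) = VTor x y <->
   (chr x y p) ^+ 2 = s /\ tau * (chr x y p) ^+ k = 1).
Proof.
move=> hx hy; rewrite vactT; have [hx' hy'] := it_neq0 _ _ hx hy.
have hX : chr x y astar != 0 by exact: chr_neq0.
have hY : chr x y p != 0 by exact: chr_neq0.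
have EY := Yc_act _ _ hx hy; have EX := Xc_act _ _ hx hy.
split.
- case=> ex ey.
  rewrite ex ey in EY EX; split; first exact: alg_c.
  exact: alg_a hX (esym EX).
- case=> h2 hk; apply: (torus_eq _ _ _ _ hx' hy' hx hy).
    by rewrite EX; exact: alg_b.
  by rewrite EY; exact: alg_d.
Qed.


Lemma inv_tau : tau ^+ 2 * s ^+ k = 1.
Proof.
have h11 : (1 : C) != 0 := oner_neq0 _.
have := Hinv (VTor 1 1) (conj h11 h11).
rewrite !vactT => -[E1 E2].
have [hx1 hy1] := it_neq0 _ _ h11 h11.
have := Xc_act _ _ hx1 hy1; rewrite E1 E2 chr11 (Xc_act _ _ h11 h11) (Yc_act _ _ h11 h11) !chr11.
by move=> /esym; apply: alg_e.
Qed.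

Let pA' := pA A a HdetA Aa.

Lemma vactR u (c : C) : vact A t1 t2 (VRay u c) =
  VRay (mapply A u) (c^-1 * chr t1 t2 (mperp (mapply A u))).
Proof. by rewrite /= HdetA exprN1. Qed.

Lemma ray_cases u : u \in S -> u = a \/ u = negZ2 a \/ det2 a u != 0.
Proof.
move=> uS; case: (eqVneq (det2 a u) 0) => h; last by right; right.
have C := succP HS uS.
by case: (line_pm _ _ _ _ dae h (cone_det C)) => ->; [left|right;left].
Qed.

Lemma vprojRa (c : C) : vproj p (VRay a c) = P1Tor c.
Proof. by rewrite /vproj pairZ2_mperp det2uu eqxx eqxx expr1z. Qed.

Lemma p_neq : (mperp a == mperp (negZ2 a)) = false.
Proof.
apply/negP => /eqP h.
have := congr1 (fun m => pairZ2 m e) h; rewrite /= !pairZ2_mperp dnx dae.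
move/eqP; rewrite -subr_eq0 opprK; by [].
Qed.

Lemma vprojRna (c : C) : vproj p (VRay (negZ2 a) c) = P1Tor c^-1.
Proof. by rewrite /vproj pairZ2_mperp dxn det2uu oppr0 eqxx p_neq exprN1. Qed.

Lemma vprojRo u (c : C) : det2 a u != 0 ->
  vproj p (VRay u c) = if 0 < det2 a u then P1Pos R else P1Neg R.
Proof. by move=> h; rewrite /vproj pairZ2_mperp (negPf h). Qed.

Lemma cone_sum u w : is_cone S u w -> det2 a u + det2 a w != 0.
Proof.
move=> C; have hp := nostraddle aS naS C.
have I := plk2 a e u w; rewrite dae (cone_det C) mulr1 in I.
apply/negP => /eqP hs.
have hu : det2 a u = 0 by nia.
have hw : det2 a w = 0 by nia.
by move: I; rewrite hu hw !mul0r mulr0 subrr.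
Qed.

Lemma base_inv q : vvalid S q -> vproj p (vact A t1 t2 q) = p1act false s (vproj p q).
Proof.
case: q => [x y [hx hy] | u c [uS hc] | u w C].
- by rewrite vactT /= Yc_act.
- rewrite vactR; case: (ray_cases _ uS) => [->|[->|h]].
  + by rewrite Aa !vprojRa /= mulrC.
  + rewrite mapply_neg Aa !vprojRna /= mperp_neg chrN.
    by rewrite invfM !invrK mulrC.
  + have h' : det2 a (mapply A u) != 0 by rewrite pA' oppr_eq0.
    rewrite !vprojRo // pA' oppr_gt0.
    by case: (ltrgtP (det2 a u) 0) h => // ->.
- rewrite /= HdetA /= !pairZ2_mperp !pA'.
  have := cone_sum _ _ C.
  case: (ltrgtP (det2 a u + det2 a w) 0) => // h _.
    by rewrite ifT //; lia.
  by rewrite ifF //; apply/negbTE; lia.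
Qed.

Lemma s_neq0 : s != 0.
Proof. exact: chr_neq0. Qed.

Lemma fixR u (c : C) : u \in S -> c != 0 ->
  (vact A t1 t2 (VRay u c) = VRay u c <->
   (u = a /\ c ^+ 2 = s) \/ (u = negZ2 a /\ c ^+ 2 * s = 1)).
Proof.
move=> uS hc; rewrite vactR; split.
- case=> hu hc'; case: (ray_cases _ uS) => [ua|[ua|h]].
  + left; split=> //; rewrite ua Aa in hc'; exact/(@alg_f _ c _ hc).
  + right; split=> //; rewrite ua mapply_neg Aa mperp_neg chrN in hc'.
    exact/(@alg_g _ c _ hc s_neq0).
  + exfalso; have := pA' u; rewrite hu => E; move: h; rewrite E; lia.
- case=> [[ua h2]|[ua h2]]; rewrite ua.
  + by rewrite Aa; congr VRay; apply/(@alg_f _ c _ hc).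
  + rewrite mapply_neg Aa mperp_neg chrN; congr VRay; exact/(@alg_g _ c _ hc s_neq0).
Qed.

Definition fixedP (q : vpoint R) := vvalid S q /\ vact A t1 t2 q = q.

Lemma fixed_char q : fixedP q <->
  (exists x y, [/\ q = VTor x y, x != 0, y != 0, (chr x y p) ^+ 2 = s & tau * (chr x y p) ^+ k = 1]) \/
  (exists c, q = VRay a c /\ c ^+ 2 = s) \/
  (exists c, q = VRay (negZ2 a) c /\ c ^+ 2 * s = 1).
Proof.
split.
- case; case: q => [x y [hx hy] | u c [uS hc] | u w C] E.
  + by left; exists x, y; have [h1 h2] := (fixT _ _ hx hy).1 E; split.
  + right; case: ((fixR _ _ uS hc).1 E) => [[-> h]|[-> h]]; [left|right]; by exists c.
  + by case: (Hnofix _ _ C E).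
- case => [[x [y [-> hx hy h2 hk]]] | [[c [-> h]] | [c [-> h]]]].
  + by split; [split | apply/(fixT _ _ hx hy)].
  + have hc : c != 0.
      apply/negP => /eqP c0; move: h; rewrite c0 expr0n /= => /esym/eqP.
      by rewrite (negPf s_neq0).
    by split; [split | apply/(fixR _ _ aS hc); left].
  + have hc : c != 0.
      by apply/negP => /eqP c0; move: h; rewrite c0 expr0n /= mul0r => /esym/eqP; rewrite oner_eq0.
    by split; [split | apply/(fixR _ _ naS hc); right].
Qed.

Lemma fiber_char (y0 : C) q : y0 != 0 -> (in_fiber S p (P1Tor y0) q <->
  (exists x y, [/\ q = VTor x y, x != 0, y != 0 & chr x y p = y0]) \/ q = VRay a y0 \/
  (exists c, q = VRay (negZ2 a) c /\ c^-1 = y0)).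
Proof.
move=> hy0; split.
- case; case: q => [x y [hx hy] | u c [uS hc] | u w C] E.
  + by left; exists x, y; split => //; case: E.
  + right; case: (ray_cases _ uS) => [ua|[ua|h]].
    * by move: E; rewrite ua vprojRa => -[->]; left.
    * by move: E; rewrite ua vprojRna => -[<-]; right; exists c.
    * by move: E; rewrite vprojRo //; case: ifP.
  + by move: E; rewrite /vproj; case: ifP.
- case => [[x [y [-> hx hy <-]]] | [-> | [c [-> hc]]]].
  + by split.
  + by split; [split | exact: vprojRa].
  + have c0 : c != 0.
      by apply/negP => /eqP c0; move: hc; rewrite c0 invr0 => /esym/eqP; rewrite (negPf hy0).
    by split; [split | rewrite vprojRna hc].
Qed.

Lemma torpt (Y : C) : Y != 0 -> exists x y, [/\ x != 0, y != 0 & chr x y p = Y].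
Proof.
move=> hY; have h1 : (1 : C) != 0 := oner_neq0 _.
exists (chr 1 Y (a.1, e.1)), (chr 1 Y (a.2, e.2)); split; try exact: chr_neq0.
rewrite chr_comp //.
have -> : ((mperp a).1 * (a.1, e.1).1 + (mperp a).2 * (a.2, e.2).1,
           (mperp a).1 * (a.1, e.1).2 + (mperp a).2 * (a.2, e.2).2) = (0, 1).
  move: dae; rewrite /det2 /mperp /= => d; congr pair; first ring.
  by rewrite -d; ring.
exact: chr01.
Qed.

Lemma r_exists : exists r : C, [/\ r != 0, r ^+ 2 = s &
  (~~ odd k /\ (tau * r ^+ k = 1 \/ tau * r ^+ k = -1)) \/ (odd k /\ tau * r ^+ k = 1)].
Proof.
have hr0 : sqrtC s ^+ 2 = s := sqrtCK s.
have r0nz : sqrtC s != 0.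
  apply/negP => /eqP h; move: hr0; rewrite h expr0n /= => /esym/eqP.
  by rewrite (negPf s_neq0).
have e2 : (tau * sqrtC s ^+ k) ^+ 2 = 1.
  by rewrite exprMn -exprM mulnC exprM hr0 inv_tau.
move/eqP: e2; rewrite sqrf_eq1 => /orP[/eqP h1|/eqP h1].
  case: (boolP (odd k)) => ok.
    by exists (sqrtC s); split=> //; right.
  by exists (sqrtC s); split => //; left; split=> //; left.
case: (boolP (odd k)) => ok.
  exists (- sqrtC s); split; [by rewrite oppr_eq0 | by rewrite sqrrN | right; split => //].
  by rewrite neg_pow h1 -signr_odd ok /= expr1 mulrN1 opprK.
by exists (sqrtC s); split=> //; left; split => //; right.
Qed.

Definition E0P := exists a1 a2 b1 b2 : vpoint R,
  [/\ a1 <> a2, b1 <> b2, on_divisor S a a1 /\ on_divisor S a a2,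
      on_divisor S (negZ2 a) b1 /\ on_divisor S (negZ2 a) b2 &
      forall q, fixedP q <-> (q = a1 \/ q = a2 \/ q = b1 \/ q = b2)].
Definition E1P := exists (z : p1point R) (q1 q2 : vpoint R),
  [/\ p1valid z, on_divisor S a q1 /\ on_divisor S (negZ2 a) q2,
      ~ in_fiber S p z q1 /\ ~ in_fiber S p z q2 &
      forall q, fixedP q <-> (in_fiber S p z q \/ q = q1 \/ q = q2)].
Definition E2P := exists (z1 z2 : p1point R),
  [/\ p1valid z1, p1valid z2, z1 <> z2 &
      forall q, fixedP q <-> (in_fiber S p z1 q \/ in_fiber S p z2 q)].

Lemma notE0 q : fixedP q -> (exists x y, q = VTor x y) -> ~ E0P.
Proof.
move=> fq [x [y qE]] [a1 [a2 [b1 [b2 [_ _ [d1 d2] [d3 d4] H]]]]].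
case: ((H q).1 fq) => [E|[E|[E|E]]]; [move: d1|move: d2|move: d3|move: d4];
  rewrite -E qE; by case.
Qed.

Lemma c_nz (c : C) : c ^+ 2 * s = 1 -> c != 0.
Proof.
by move=> h; apply/negP => /eqP c0; move: h; rewrite c0 expr0n mul0r => /esym/eqP; rewrite oner_eq0.
Qed.

Lemma fixed_proj (r : C) q : r ^+ 2 = s -> fixedP q -> vproj p q = P1Tor r \/ vproj p q = P1Tor (-r).
Proof.
move=> hr /fixed_char [[x [y [-> hx hy h2 _]]] | [[c [-> h]] | [c [-> h]]]].
- by rewrite /=; case: ((@sq_pm _ r (chr x y p) s hr).1 h2) => ->; [left|right].
- by rewrite vprojRa; case: ((@sq_pm _ r c s hr).1 h) => ->; [left|right].
- rewrite vprojRna; have hc := c_nz _ h.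
  have h' := (@inv_sq _ c s hc).1 h.
  by case: ((@sq_pm _ r c^-1 s hr).1 h') => ->; [left|right].
Qed.

Lemma fiber_nonempty (z : p1point R) : p1valid z -> exists q, in_fiber S p z q.
Proof.
case: z => [c hc | _ | _].
- have [x [y [hx hy hY]]] := torpt _ hc.
  by exists (VTor x y); split => //=; rewrite hY.
- exists (VRay e 1); split; first by split => //; exact: oner_neq0.
  by rewrite vprojRo ?dae // ltr01.
- exists (VRay (mapply A e) 1); split; first by split; [exact: HA | exact: oner_neq0].
  by rewrite vprojRo pA' dae //.
Qed.

Lemma zpm (r : C) (z : p1point R) : r ^+ 2 = s -> p1valid z -> (forall q, in_fiber S p z q -> fixedP q) ->
  z = P1Tor r \/ z = P1Tor (-r).
Proof.
move=> hr hz H; have [q hq] := fiber_nonempty _ hz.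
by have := fixed_proj _ _ hr (H _ hq); case: hq => _ ->.
Qed.

Lemma torus_fib (y0 : C) : y0 != 0 -> exists x y,
  [/\ x != 0, y != 0, chr x y p = y0 & in_fiber S p (P1Tor y0) (VTor x y)].
Proof.
move=> hy0; have [x [y [hx hy hY]]] := torpt _ hy0.
by exists x, y; split => //; split => //=; rewrite hY.
Qed.

Lemma fixT_char (x y : C) : fixedP (VTor x y) ->
  (chr x y p) ^+ 2 = s /\ tau * (chr x y p) ^+ k = 1.
Proof. by case=> [[hx hy] E]; exact: (fixT _ _ hx hy).1 E. Qed.

Lemma fib_fixed (y0 : C) : y0 != 0 -> y0 ^+ 2 = s -> tau * y0 ^+ k = 1 ->
  forall q, in_fiber S p (P1Tor y0) q -> fixedP q.
Proof.
move=> hy0 h2 hk q /(fiber_char _ _ hy0) [[x [y [-> hx hy hY]]] | [-> | [c [-> hc]]]];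
  apply/fixed_char.
- by left; exists x, y; split => //; rewrite hY.
- by right; left; exists y0.
- right; right; exists c; split => //.
  have c0 : c != 0.
    by apply/negP => /eqP c0; move: hc; rewrite c0 invr0 => /esym/eqP; rewrite (negPf hy0).
  by apply/(@inv_sq _ c s c0); rewrite hc.
Qed.

Lemma fixed_in_fib (r : C) q : r ^+ 2 = s -> fixedP q ->
  in_fiber S p (P1Tor r) q \/ in_fiber S p (P1Tor (-r)) q.
Proof.
move=> hr fq; case: (fixed_proj _ _ hr fq) => E; [left|right]; split => //; exact: fq.1.
Qed.

Lemma caseA r : r != 0 -> r ^+ 2 = s -> ~~ odd k -> tau * r ^+ k = 1 ->
  [/\ ~ E0P, ~ E1P & E2P].
Proof.
move=> hr0 hr ek g1.
have g2 : tau * (-r) ^+ k = 1 by rewrite neg_pow -signr_odd (negPf ek) expr0 mul1r.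
have nr : r != -r := neg_neq hr0.
have hnr : -r != 0 by rewrite oppr_eq0.
have hr' : (-r) ^+ 2 = s by rewrite sqrrN.
have [x1 [y1 [hx1 hy1 hY1 F1]]] := torus_fib _ hr0.
have [x2 [y2 [hx2 hy2 hY2 F2]]] := torus_fib _ hnr.
have fx1 := fib_fixed _ hr0 hr g1 _ F1.
have fx2 := fib_fixed _ hnr hr' g2 _ F2.
split.
- by apply: (notE0 _ fx1); exists x1, y1.
- move=> [z [q1 [q2 [hz [d1 d2] _ H]]]].
  have inz (x y : C) : fixedP (VTor x y) -> in_fiber S p z (VTor x y).
    move=> f; case: ((H _).1 f) => [//|[E|E]]; [move: d1|move: d2]; rewrite -E; by case.
  case: (inz _ _ fx1) => _ /= E1; case: (inz _ _ fx2) => _ /= E2.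
  rewrite -E2 hY1 hY2 in E1; case: E1 => E.
  by move: nr; rewrite {1}E eqxx.
- exists (P1Tor r), (P1Tor (-r)); split => //.
    by case => /eqP; rewrite (negPf nr).
  move=> q; split; first exact: fixed_in_fib.
  by case; [exact: (fib_fixed _ hr0 hr g1 q) | exact: (fib_fixed _ hnr hr' g2 q)].
Qed.

Lemma no_full_fiber (r : C) (z : p1point R) : r ^+ 2 = s ->
  (forall x y, ~ fixedP (VTor x y)) -> p1valid z ->
  ~ (forall q, in_fiber S p z q -> fixedP q).
Proof.
move=> hr nofix hz H.
have hr0 : r != 0.
  by apply/negP => /eqP r0; move: hr; rewrite r0 expr0n /= => /esym/eqP; rewrite (negPf s_neq0).
have hnr : -r != 0 by rewrite oppr_eq0.
case: (zpm _ _ hr hz H) => E; rewrite E in H.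
  by have [x [y [_ _ _ F]]] := torus_fib _ hr0; apply: (nofix x y); apply: H.
by have [x [y [_ _ _ F]]] := torus_fib _ hnr; apply: (nofix x y); apply: H.
Qed.

Lemma caseB r : r != 0 -> r ^+ 2 = s -> ~~ odd k -> tau * r ^+ k = -1 ->
  [/\ E0P, ~ E1P & ~ E2P].
Proof.
move=> hr0 hr ek g1.
have g2 : tau * (-r) ^+ k = -1 by rewrite neg_pow -signr_odd (negPf ek) expr0 mul1r.
have nr : r != -r := neg_neq hr0.
have hnr : -r != 0 by rewrite oppr_eq0.
have hr' : (-r) ^+ 2 = s by rewrite sqrrN.
have nofix x y : ~ fixedP (VTor x y).
  move/fixT_char => [h2 hk].
  have : (-1 : C) = 1.
    case: ((@sq_pm _ r _ s hr).1 h2) => hY; rewrite hY in hk; [by rewrite -g1 hk | by rewrite -g2 hk].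
  by move/eqP; rewrite (negPf m1_neq1).
split.
- exists (VRay a r), (VRay a (-r)), (VRay (negZ2 a) r^-1), (VRay (negZ2 a) (-r)^-1).
  split.
  + by case => /eqP; rewrite (negPf nr).
  + by case => /eqP; rewrite invrN (negPf (neg_neq (inv_neq0 hr0))).
  + by split; split => //; split.
  + by split; split => //; split => //; rewrite invr_eq0.
  move=> q; split.
  + case/fixed_char => [[x [y [qE hx hy h2 hk]]] | [[c [-> h]] | [c [-> h]]]].
    * by exfalso; apply: (nofix x y); rewrite -qE; apply/fixed_char; left; exists x, y.
    * by case: ((@sq_pm _ r c s hr).1 h) => ->; [left|right;left].
    * have hc := c_nz _ h; have h' := (@inv_sq _ c s hc).1 h.
      right; right; case: ((@sq_pm _ r c^-1 s hr).1 h') => <-; rewrite invrK; by [left|right].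
  + move=> hq; apply/fixed_char; right.
    case: hq => [->|[->|[->|->]]].
    * by left; exists r.
    * by left; exists (-r).
    * right; exists r^-1; split => //.
      by apply/(@inv_sq _ r^-1 s (inv_neq0 hr0)); rewrite invrK.
    * right; exists (-r)^-1; split => //.
      by apply/(@inv_sq _ (-r)^-1 s (inv_neq0 hnr)); rewrite invrK.
- move=> [z [q1 [q2 [hz _ _ H]]]].
  by apply: (no_full_fiber _ _ hr nofix hz) => q hq; apply/H; left.
- move=> [z1 [z2 [hz1 _ _ H]]].
  by apply: (no_full_fiber _ _ hr nofix hz1) => q hq; apply/H; left.
Qed.

Lemma caseC r : r != 0 -> r ^+ 2 = s -> odd k -> tau * r ^+ k = 1 ->
  [/\ ~ E0P, E1P & ~ E2P].
Proof.
move=> hr0 hr ok g1.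
have g2 : tau * (-r) ^+ k = -1 by rewrite neg_pow -signr_odd ok expr1 g1 mulr1.
have nr : r != -r := neg_neq hr0.
have hnr : -r != 0 by rewrite oppr_eq0.
have hr' : (-r) ^+ 2 = s by rewrite sqrrN.
have nofix x y : chr x y p = -r -> ~ fixedP (VTor x y).
  move=> hY /fixT_char [_ hk]; move: hk; rewrite hY g2 => /eqP.
  by rewrite (negPf m1_neq1).
have [x1 [y1 [hx1 hy1 hY1 F1]]] := torus_fib _ hr0.
have fx1 := fib_fixed _ hr0 hr g1 _ F1.
split.
- by apply: (notE0 _ fx1); exists x1, y1.
- exists (P1Tor r), (VRay a (-r)), (VRay (negZ2 a) (-r)^-1); split => //.
  + by split; split => //; split => //; rewrite invr_eq0.
  + split.
      by case=> _; rewrite vprojRa => -[] /eqP; rewrite eq_sym (negPf nr).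
    by case=> _; rewrite vprojRna invrK => -[] /eqP; rewrite eq_sym (negPf nr).
  move=> q; split.
  + case/fixed_char => [[x [y [qE hx hy h2 hk]]] | [[c [-> h]] | [c [-> h]]]].
    * left; rewrite qE; split => //=; congr P1Tor.
      case: ((@sq_pm _ r _ s hr).1 h2) => // hY.
      by exfalso; apply: (nofix x y hY); rewrite -qE; apply/fixed_char; left; exists x, y.
    * case: ((@sq_pm _ r c s hr).1 h) => ->; last by right; left.
      by left; split; [split | exact: vprojRa].
    * have hc := c_nz _ h; have h' := (@inv_sq _ c s hc).1 h.
      case: ((@sq_pm _ r c^-1 s hr).1 h') => hci.
        by left; split; [split | rewrite vprojRna hci].
      by right; right; rewrite -hci invrK.
  + case => [|[->|->]].
    * exact: (fib_fixed _ hr0 hr g1 q).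
    * by apply/fixed_char; right; left; exists (-r).
    * apply/fixed_char; right; right; exists (-r)^-1; split => //.
      by apply/(@inv_sq _ (-r)^-1 s (inv_neq0 hnr)); rewrite invrK.
- move=> [z1 [z2 [hz1 hz2 hne H]]].
  have H1 q : in_fiber S p z1 q -> fixedP q by move=> hq; apply/H; left.
  have H2 q : in_fiber S p z2 q -> fixedP q by move=> hq; apply/H; right.
  have [x2 [y2 [hx2 hy2 hY2 F2]]] := torus_fib _ hnr.
  case: (zpm _ _ hr hz1 H1) => E1; case: (zpm _ _ hr hz2 H2) => E2.
  + by apply: hne; rewrite E1 E2.
  + by apply: (nofix x2 y2 hY2); apply: H2; rewrite E2.
  + by apply: (nofix x2 y2 hY2); apply: H1; rewrite E1.
  + by apply: hne; rewrite E1 E2.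
Qed.

Lemma core_all : toric_ruling S (mperp a) a /\
  (exists (eps : bool) (s0 : C),
     [/\ s0 != 0,
         forall z, p1valid z -> p1act eps s0 (p1act eps s0 z) = z,
         exists z, p1valid z /\ p1act eps s0 z <> z &
         forall q, vvalid S q -> vproj p (vact A t1 t2 q) = p1act eps s0 (vproj p q)]) /\
  [\/ [/\ E0P, ~ E1P & ~ E2P], [/\ ~ E0P, E1P & ~ E2P] | [/\ ~ E0P, ~ E1P & E2P]] /\
  exists (e' : Z2) (n : nat),
    [/\ det2 e' a = 1 \/ det2 e' a = -1,
        subdivides S (hirzebruch_fan e' a n),
        (forall u, u \in hirzebruch_fan e' a n -> mapply A u \in hirzebruch_fan e' a n),
        (E0P \/ E2P -> ~~ odd n) & (E1P -> odd n)].
Proof.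
split; first exact: (ruling S a e aS naS dae).
split.
  exists false, s; split.
  - exact: s_neq0.
  - by case => [c hc | |] //= ; rewrite alg_h // s_neq0.
  - by exists (P1Pos R); split.
  - exact: base_inv.
have Hsub : subdivides S (hirzebruch_fan e a k) := hirz_sub S A a e k HA HdetA aS naS eS dae Ae.
have Hinvh := hirz_inv S A a e k HAA eS Aa Ae.
have [r [hr0 hr [[ek [g1|g1]]|[ok g1]]]] := r_exists.
- have [n0 n1 y2] := caseA _ hr0 hr ek g1.
  split; first by constructor 3.
  by exists e, k; split => //; right; exact: dea'.
- have [y0 n1 n2] := caseB _ hr0 hr ek g1.
  split; first by constructor 1.
  by exists e, k; split => //; right; exact: dea'.
- have [n0 y1 n2] := caseC _ hr0 hr ok g1.
  split; first by constructor 2.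
  exists e, k; split => //; first by right; exact: dea'.
  by case.
Qed.

End CoreCx.

Theorem lemma7p2 (R : realType) (S : seq Z2) (A : mat2) (t1 t2 : R[i]) :
  smooth_complete_fan S ->
  (* iota = t . A_* is a well-defined automorphism of (V,D) *)
  (forall u, u \in S -> mapply A u \in S) ->
  t1 != 0 -> t2 != 0 ->
  (* iota is an involution of V *)
  (forall q, vvalid S q -> vact A t1 t2 (vact A t1 t2 q) = q) ->
  (* nonsymplectic *)
  det_mat2 A = -1 ->
  (* no torus-fixed point of V is fixed by iota *)
  (forall u w, is_cone S u w -> vact A t1 t2 (VFix R u w) <> VFix R u w) ->
  exists (p v : Z2),
    toric_ruling S p v /\
    (* pi commutes with a nontrivial involution of the base P^1 *)
    (exists (eps : bool) (s : R[i]),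
        [/\ s != 0,
            forall z, p1valid z -> p1act eps s (p1act eps s z) = z,
            exists z, p1valid z /\ p1act eps s z <> z &
            forall q, vvalid S q -> vproj p (vact A t1 t2 q) = p1act eps s (vproj p q)]) /\
    let fixed q := vvalid S q /\ vact A t1 t2 q = q in
    let s1 := on_divisor S v in
    let s2 := on_divisor S (negZ2 v) in
    let E0 := exists a1 a2 b1 b2 : vpoint R,
        [/\ a1 <> a2, b1 <> b2, s1 a1 /\ s1 a2, s2 b1 /\ s2 b2 &
            forall q, fixed q <-> (q = a1 \/ q = a2 \/ q = b1 \/ q = b2)] in
    let E1 := exists (z : p1point R) (q1 q2 : vpoint R),
        [/\ p1valid z, s1 q1 /\ s2 q2,
            ~ in_fiber S p z q1 /\ ~ in_fiber S p z q2 &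
            forall q, fixed q <-> (in_fiber S p z q \/ q = q1 \/ q = q2)] in
    let E2 := exists (z1 z2 : p1point R),
        [/\ p1valid z1, p1valid z2, z1 <> z2 &
            forall q, fixed q <-> (in_fiber S p z1 q \/ in_fiber S p z2 q)] in
    [\/ [/\ E0, ~ E1 & ~ E2], [/\ ~ E0, E1 & ~ E2] | [/\ ~ E0, ~ E1 & E2]] /\
    (* the fan is an iota-invariant subdivision of the fan of F_n (whose
       ruling is pi, i.e. f = v), with the parity of n as stated *)
    exists (e : Z2) (n : nat),
      [/\ det2 e v = 1 \/ det2 e v = -1,
          subdivides S (hirzebruch_fan e v n),
          (forall u, u \in hirzebruch_fan e v n -> mapply A u \in hirzebruch_fan e v n),
          (E0 \/ E2 -> ~~ odd n) & (E1 -> odd n)].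
Proof.
move=> HS HA ht1 ht2 Hinv HdetA Hnofix.
have HAA : forall u, u \in S -> mapply A (mapply A u) = u.
  move=> u uS; have := Hinv (VRay u 1) (conj uS (oner_neq0 _)).
  by case.
have Hnofix' : forall u w, is_cone S u w -> mapply A w = u -> mapply A u = w -> False.
  move=> u w C E1 E2; apply: (Hnofix u w C).
  by rewrite /= HdetA /= E1 E2.
have [a [aS naS Aa]] := fixed_ray S A HS HA HAA HdetA Hnofix'.
have C := succP HS aS.
set e := succ S a in C.
have dae := cone_det C; have eS := cone_inr C.
set n := det2 (mapply A e) e.
have dAe : det2 a (mapply A e) = -1.
  by rewrite -{1}Aa det_mapply HdetA dae mulr1.
have Ae : mapply A e = (n * a.1 - e.1, n * a.2 - e.2).
  by rewrite {1}(cramer (mapply A e) dae) dAe !mulN1r.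
case: (lerP 0 n) => hn.
- have [k kE] : exists k : nat, n = k%:Z by exists `|n|%N; rewrite gez0_abs.
  have Aek : mapply A e = (k%:Z * a.1 - e.1, k%:Z * a.2 - e.2) by rewrite -kE.
  have [H1 [H2 [H3 H4]]] := core_all R S A t1 t2 a e k HS HA HAA HdetA ht1 ht2 Hinv Hnofix aS naS eS dae Aa Aek.
  by exists (mperp a), a; split => //; split => //; try exact: (conj H3 H4).
have [m mE] : exists m : nat, n = - m%:Z.
  by exists `|n|%N; rewrite ltz0_abs // opprK.
have naS' : negZ2 (negZ2 a) \in S by rewrite negZ2K.
have AeS : mapply A e \in S by exact: HA.
have dae' : det2 (negZ2 a) (mapply A e) = 1 by rewrite dnx dAe opprK.
have Aa' : mapply A (negZ2 a) = negZ2 a by rewrite mapply_neg Aa.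
have Ae' : mapply A (mapply A e) = (m%:Z * (negZ2 a).1 - (mapply A e).1, m%:Z * (negZ2 a).2 - (mapply A e).2).
  rewrite HAA // Ae mE /negZ2 /=; case: (e) => e1 e2 /=; congr pair; ring.
have [H1 [H2 [H3 H4]]] := core_all R S A t1 t2 (negZ2 a) (mapply A e) m HS HA HAA HdetA ht1 ht2 Hinv Hnofix naS naS' AeS dae' Aa' Ae'.
by exists (mperp (negZ2 a)), (negZ2 a); split => //; split => //; try exact: (conj H3 H4).
Qed.
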